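(* Consider the distributed detection model in the context and suppose $\alpha>\frac{1}{P_{0,1}+P_{1,0}}$ (so that $\pi_{1,1}<\pi_{1,0}$), with $0<\pi_{1,0},\pi_{1,1}<1$. Let $k=\sum_{i=1}^N u_i$ be the number of received ones. Then the MAP (error-probability-minimizing) fusion rule decides $H_0$ if $k>T'$ and $H_1$ if $k<T'$, where $$T'=\frac{\ln\left[\frac{P_1}{P_0}\left(\frac{1-\pi_{1,1}}{1-\pi_{1,0}}\right)^{N}\right]}{\ln\frac{\pi_{1,0}}{\pi_{1,1}}+\ln\frac{1-\pi_{1,1}}{1-\pi_{1,0}}}.$$
   Context: Binary hypothesis test between $H_0$ and $H_1$ with priors $P_0,P_1\in(0,1)$, $P_0+P_1=1$. There are $N$ sensors, each using the same fixed local threshold, so that conditionally on the hypothesis their local decisions $v_i\in\{0,1\}$ are i.i.d. with $P(v_i=1\mid H_1)=P_d$, $P(v_i=1\mid H_0)=P_f$, where $0<P_f<P_d<1$. Each sensor independently is Byzantine with probability $\alpha\in[0,1]$. Honest nodes send $u_i=v_i$; a Byzantine node sends $u_i=1$ with probability $P_{1,0}$ when $v_i=0$ and sends $u_i=0$ with probability $P_{0,1}$ when $v_i=1$. Hence conditionally on $H_j$ the $u_i$ are i.i.d. with $P(u_i=1\mid H_0)=\pi_{1,0}=\alpha(P_{1,0}(1-P_f)+(1-P_{0,1})P_f)+(1-\alpha)P_f$ and $P(u_i=1\mid H_1)=\pi_{1,1}=\alpha(P_{1,0}(1-P_d)+(1-P_{0,1})P_d)+(1-\alpha)P_d$. The fusion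 center knows $(\alpha,P_{1,0},P_{0,1})$ and the MAP rule decides $H_1$ when $P(\mathbf u\mid H_1)/P(\mathbf u\mid H_0)>P_0/P_1$ and $H_0$ when it is $<P_0/P_1$. *)

(* Defs.v *)
From Stdlib Require Import Reals List.
Import ListNotations.
Open Scope R_scope.

(* P(u_i = 1 | H_0) *)
Definition pi10 (alpha P10 P01 Pf : R) : R :=
  alpha * (P10 * (1 - Pf) + (1 - P01) * Pf) + (1 - alpha) * Pf.

(* P(u_i = 1 | H_1) *)
Definition pi11 (alpha P10 P01 Pd : R) : R :=
  alpha * (P10 * (1 - Pd) + (1 - P01) * Pd) + (1 - alpha) * Pd.

Fixpoint lik (p : R) (u : list bool) : R :=
  match u with
  | [] => 1
  | b :: u' => (if b then p else 1 - p) * lik p u'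
  end.

Definition num_ones (u : list bool) : nat := length (filter (fun b => b) u).

Definition MAP_decides_H1 (l1 l0 P0 P1 : R) : Prop := l1 / l0 > P0 / P1.
Definition MAP_decides_H0 (l1 l0 P0 P1 : R) : Prop := l1 / l0 < P0 / P1.

Definition Tprime (N : nat) (P0 P1 p10 p11 : R) : R :=
  ln (P1 / P0 * ((1 - p11) / (1 - p10)) ^ N) /
  (ln (p10 / p11) + ln ((1 - p11) / (1 - p10))).

(* Main.v *)
Require Import Defs.
From Stdlib Require Import Reals List Lra.
Open Scope R_scope.

Lemma ln_div' x y : 0 < x -> 0 < y -> ln (x / y) = ln x - ln y.
Proof.
  intros hx hy. unfold Rdiv. rewrite ln_mult, ln_Rinv; try lra.
  apply Rinv_0_lt_compat; lra.
Qed.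

Lemma lik_pos p u : 0 < p < 1 -> 0 < lik p u.
Proof.
  intros hp. induction u as [|b u IH]; simpl; [lra|].
  apply Rmult_lt_0_compat; [destruct b; lra|exact IH].
Qed.

Lemma ln_lik p u : 0 < p < 1 ->
  ln (lik p u) = INR (num_ones u) * ln p + (INR (length u) - INR (num_ones u)) * ln (1 - p).
Proof.
  intros hp. induction u as [|b u IH]; unfold num_ones in *; cbn [lik filter length].
  - rewrite ln_1. simpl. ring.
  - rewrite ln_mult; [| destruct b; lra | apply lik_pos; lra].
    rewrite IH. destruct b; cbn [filter length]; rewrite ?(S_INR (length _)); ring.
Qed.

Theorem lemma5 (N : nat) (P0 P1 Pd Pf alpha P10 P01 : R)
  (hP0 : 0 < P0 < 1) (hP1 : 0 < P1 < 1) (hP : P0 + P1 = 1)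
  (hPf : 0 < Pf) (hPfd : Pf < Pd) (hPd : Pd < 1)
  (halpha : 0 <= alpha <= 1)
  (hP10 : 0 <= P10 <= 1) (hP01 : 0 <= P01 <= 1)
  (hsum : 0 < P01 + P10)
  (hblind : alpha > 1 / (P01 + P10))
  (hpi10 : 0 < pi10 alpha P10 P01 Pf < 1)
  (hpi11 : 0 < pi11 alpha P10 P01 Pd < 1)
  (u : list bool) (hu : length u = N) :
  let p10 := pi10 alpha P10 P01 Pf in
  let p11 := pi11 alpha P10 P01 Pd in
  let T := Tprime N P0 P1 p10 p11 in
  (INR (num_ones u) > T -> MAP_decides_H0 (lik p11 u) (lik p10 u) P0 P1) /\
  (INR (num_ones u) < T -> MAP_decides_H1 (lik p11 u) (lik p10 u) P0 P1).
Proof.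
  intros p10 p11 T.
  assert (hab : alpha * (P01 + P10) > 1).
  { apply (Rmult_gt_compat_r (P01 + P10)) in hblind; [|lra].
    unfold Rdiv in hblind. rewrite Rmult_assoc, Rinv_l in hblind; lra. }
  assert (hlt : p11 < p10).
  { unfold p11, p10, pi11, pi10.
    assert (e : alpha * (P10 * (1 - Pd) + (1 - P01) * Pd) + (1 - alpha) * Pd
      - (alpha * (P10 * (1 - Pf) + (1 - P01) * Pf) + (1 - alpha) * Pf)
      = (Pd - Pf) * (1 - alpha * (P01 + P10))) by ring.
    assert ((Pd - Pf) * (1 - alpha * (P01 + P10)) < 0).
    { apply Rmult_pos_neg; lra. }
    lra. }
  fold p10 p11 in hpi10, hpi11.
  set (a := ln p10 - ln p11).
  set (c := ln (1 - p11) - ln (1 - p10)).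
  assert (ha : 0 < a). { unfold a. pose proof (ln_increasing p11 p10). lra. }
  assert (hc : 0 < c). { unfold c. pose proof (ln_increasing (1-p10) (1-p11)). lra. }
  set (k := INR (num_ones u)).
  set (n := INR N).
  assert (hl1 := lik_pos p11 u hpi11).
  assert (hl0 := lik_pos p10 u hpi10).
  assert (hL : ln (lik p11 u / lik p10 u) = n * c - k * (a + c)).
  { rewrite ln_div' by assumption. rewrite !ln_lik by assumption.
    rewrite hu. fold k n. unfold a, c. ring. }
  assert (hT : T = (ln P1 - ln P0 + n * c) / (a + c)).
  { unfold T, Tprime. fold c a.
    rewrite ln_mult.
    2: { unfold Rdiv; apply Rmult_lt_0_compat; [lra|apply Rinv_0_lt_compat; lra]. }
    2: { apply pow_lt. unfold Rdiv; apply Rmult_lt_0_compat; [lra|apply Rinv_0_lt_compat; lra]. }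
    rewrite ln_pow by (unfold Rdiv; apply Rmult_lt_0_compat; [lra|apply Rinv_0_lt_compat; lra]).
    rewrite !ln_div' by lra. fold c n. reflexivity. }
  assert (hPr : ln (P0 / P1) = ln P0 - ln P1) by (apply ln_div'; lra).
  assert (hq : 0 < P0 / P1) by (unfold Rdiv; apply Rmult_lt_0_compat; [lra|apply Rinv_0_lt_compat; lra]).
  assert (hr : 0 < lik p11 u / lik p10 u) by (unfold Rdiv; apply Rmult_lt_0_compat; [lra|apply Rinv_0_lt_compat; lra]).
  assert (hac : 0 < a + c) by lra.
  split; intros hk; unfold MAP_decides_H0, MAP_decides_H1.
  - apply ln_lt_inv; try assumption. rewrite hL, hPr.
    rewrite hT in hk. apply Rgt_lt in hk.
    apply (Rmult_lt_compat_r (a + c)) in hk; [|lra].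
    unfold Rdiv in hk. rewrite Rmult_assoc, Rinv_l in hk; lra.
  - apply Rlt_gt, ln_lt_inv; try assumption. rewrite hL, hPr.
    rewrite hT in hk.
    apply (Rmult_lt_compat_r (a + c)) in hk; [|lra].
    unfold Rdiv in hk. rewrite Rmult_assoc, Rinv_l in hk; lra.
Qed.
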